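(* Let $P\in N_1$ be a sum of $6$ monomials, not necessarily distinct (i.e. $P(1)=6$). If $P$ does not have unique factorisation inside $N_1$, then $P=X^a(1+X^b+X^{2b}+X^{3b}+X^{4b}+X^{5b})$ for some integers $a\ge0$ and $b\ge1$.
   Context: $N_1=\mathbb{Z}_{\ge0}[X]$ is the semiring of univariate polynomials with nonnegative integer coefficients. An element $Q\neq0,1$ of $N_1$ is irreducible if in every factorisation $Q=ST$ with $S,T\in N_1$ one of $S,T$ is $1$. $P$ has unique factorisation in $N_1$ if any two factorisations of $P$ into irreducibles of $N_1$ coincide up to order of the factors. *)

(* Defs.v *)
From mathcomp Require Import all_boot all_algebra.
Set Implicit Arguments. Unset Strict Implicit. Unset Printing Implicit Defensive.
Import GRing.Theory.
Local Open Scope ring_scope.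

(* N_1 = Z_{>=0}[X] is modelled as {poly nat} (nat is a commutative semiring). *)
Notation N1 := {poly nat}.

Definition irreducibleN1 (Q : N1) : Prop :=
  Q <> 0 /\ Q <> 1 /\ forall S T : N1, Q = S * T -> S = 1 \/ T = 1.

Definition is_factorisationN1 (P : N1) (s : seq N1) : Prop :=
  (forall q, q \in s -> irreducibleN1 q) /\ \prod_(q <- s) q = P.

Definition unique_factorisationN1 (P : N1) : Prop :=
  forall s t : seq N1, is_factorisationN1 P s -> is_factorisationN1 P t ->
    perm_eq s t.

(* Main.v *)
Require Import Defs.
From mathcomp Require Import all_boot all_algebra.
From mathcomp Require Import zify.
From Stdlib Require Import Classical.
Set Implicit Arguments. Unset Strict Implicit.

Fixpoint del (i : nat) (t : seq nat) : seq nat :=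
  match t, i with
  | [::], _ => [::]
  | y :: t', 0 => t'
  | y :: t', i'.+1 => y :: del i' t'
  end.

Lemma perm_del t i : i < size t -> perm_eq t (nth 0 t i :: del i t).
Proof.
elim: t i => [|y t IH] [|i] //= Hi.
have := IH i Hi => H.
rewrite -(perm_cons y) in H.
apply: (perm_trans H).
change (perm_eq ([:: y] ++ [:: nth 0 t i] ++ del i t) (nth 0 t i :: y :: del i t)); by rewrite perm_catCA.
Qed.

Lemma perm_step x s t : perm_eq (x :: s) t ->
  exists2 i, i < size t & (nth 0 t i = x /\ perm_eq s (del i t)).
Proof.
move=> H.
have xt : x \in t by rewrite -(perm_mem H) mem_head.
exists (index x t); first by rewrite index_mem.
rewrite nth_index //; split => //.
have xi : index x t < size t by rewrite index_mem.
have := perm_del xi; rewrite nth_index // => H2.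
by rewrite -(perm_cons x) (perm_trans H).
Qed.

Ltac peel_cases i Hi Hx H' :=
  first [ (exfalso; cbn in Hi; discriminate)
        | destruct i as [|i]; [simpl in Hx, H'; revert Hx | peel_cases i Hi Hx H'] ].

Ltac peel H :=
  let i := fresh "i" in let Hi := fresh "Hi" in let Hx := fresh "Hx" in
  let H' := fresh "H" in
  destruct (perm_step H) as [i Hi [Hx H']]; clear H; peel_cases i Hi Hx H'; clear Hi; rename H' into H.

Lemma core (t1 t2 t3 v1 v2 v3 m n : nat) :
  t1 <= t2 -> t2 <= t3 -> v1 <= v2 -> v2 <= v3 ->
  perm_eq [:: t1; t2; t3; t1 + m; t2 + m; t3 + m]
          [:: v1; v2; v3; v1 + n; v2 + n; v3 + n] ->
  (m = n -> t1 = v1 /\ t2 = v2 /\ t3 = v3) /\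
  (m < n -> t2 = t1 + 2 * m /\ t3 = t1 + 4 * m /\ 1 <= m).
Proof.
move=> h1 h2 h3 h4 H.
do 6 peel H; intros; lia.
Qed.

Unset Implicit Arguments. Set Strict Implicit.
Import GRing.Theory.
Local Open Scope ring_scope.

Definition polE (e : seq nat) : {poly nat} := \sum_(x <- e) 'X^x.

Lemma coef_polE e j : (polE e)`_j = count_mem j e.
Proof.
elim: e => [|x e IH]; first by rewrite /polE big_nil coef0.
by rewrite /polE big_cons coefD coefXn -/(polE e) IH natn /= eq_sym.
Qed.

Lemma polE_eq e f : polE e = polE f -> perm_eq e f.
Proof.
move=> H; rewrite /perm_eq; apply/allP => x _ /=; apply/eqP.
by rewrite -!coef_polE H.
Qed.

Lemma perm_polE e f : perm_eq e f -> polE e = polE f.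
Proof. by move=> H; rewrite /polE (perm_big _ H). Qed.

Lemma polE_cat e f : polE (e ++ f) = polE e + polE f.
Proof. by rewrite /polE big_cat. Qed.

Lemma polE_shift k e : polE (map (addn k) e) = 'X^k * polE e.
Proof.
rewrite /polE big_map mulr_sumr; apply: eq_bigr => x _; by rewrite exprD.
Qed.

Lemma polE_nseq0 c : polE (nseq c 0%N) = c%:P.
Proof.
elim: c => [|c IH]; first by rewrite /polE big_nil.
rewrite /polE /= big_cons -/(polE _) IH expr0.
apply/polyP => i; rewrite coefD coef1 !coefC; by case: i.
Qed.

Lemma polE_exists (Q : {poly nat}) : exists e, Q = polE e.
Proof.
elim/poly_ind: Q => [|p c [e ->]]; first by exists [::]; rewrite /polE big_nil.
exists (map (addn 1) e ++ nseq c 0%N).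
by rewrite polE_cat polE_shift polE_nseq0 expr1 (mulrC 'X).
Qed.

Lemma polE_horner e : (polE e).[1] = size e.
Proof.
elim: e => [|x e IH]; first by rewrite /polE big_nil horner0.
by rewrite /polE big_cons hornerD -/(polE e) IH hornerXn expr1n.
Qed.

Lemma polE_mul e f : polE e * polE f = polE [seq (x + y)%N | x <- e, y <- f].
Proof.
elim: e => [|x e IH]; first by rewrite /polE !big_nil mul0r.
rewrite /= polE_cat -IH /polE big_cons mulrDl -/(polE _) -/(polE [seq (x + y)%N | y <- f]) -/(polE e). by rewrite (polE_shift x f).
Qed.

Lemma polE0 : polE [::] = 0. Proof. by rewrite /polE big_nil. Qed.
Lemma polE1 x : polE [:: x] = 'X^x. Proof. by rewrite /polE big_seq1. Qed.

Lemma X_neq1 : ('X : {poly nat}) <> 1.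
Proof. move=> H; have := congr1 (fun p : {poly nat} => p`_1) H; by rewrite coefX coef1. Qed.

Lemma irr_classify q : irreducibleN1 q -> q = 'X \/ (leq 2 (q.[1]) /\ leq 1 (q`_0)%R).
Proof.
case=> q0 [q1 Hq]; have [e De] := polE_exists q.
case: (boolP (0%N \in e)) => He.
  right; rewrite De coef_polE polE_horner -has_count has_pred1 He; split=> //.
  case: e De He => [|x [|y e]] //= De; rewrite inE => /eqP x0.
  by move: q1; rewrite De -x0 polE1 expr0.
left.
have Ee : e = map (addn 1) (map predn e).
  rewrite -map_comp -[LHS]map_id; apply/eq_in_map => x xe /=.
  by case: x xe He => [|x] //= ->.
have H : q = 'X * polE (map predn e).
  by rewrite -['X]expr1 -polE_shift -Ee.
case: (Hq _ _ H) => [/X_neq1 //| E]; by rewrite H E mulr1.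
Qed.

Lemma filter_pred1_nseq (T : eqType) (x : T) s :
  filter (pred1 x) s = nseq (count_mem x s) x.
Proof. elim: s => //= y s ->; by case: eqP => [->|]. Qed.

Lemma prod_nseq (q : {poly nat}) k : \prod_(i <- nseq k q) i = q ^+ k.
Proof. elim: k => [|k IH]; by rewrite ?big_nil ?expr0 //= big_cons IH exprS. Qed.

Lemma nat_list6 (l : seq nat) : all (leq 2) l -> \prod_(x <- l) x = 6%N ->
  l = [:: 6%N] \/ l = [:: 2%N; 3%N] \/ l = [:: 3%N; 2%N].
Proof.
case: l => [|a [|b [|c l]]]; rewrite ?big_nil ?big_cons ?big_nil //=.
- by rewrite mulr1 => _ ->; left.
- rewrite mulr1 andbT => /andP [ha hb] H; right.
  have {}H : (a * b = 6)%N by [].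
  have : (a <= 3)%N by nia.
  by case: a ha H => [|[|[|[|]]]] //= _ H; [left|right]; congr [:: _; _]; lia.
- move=> /and4P [ha hb hc hl] H.
  have {}H : (a * (b * (c * \prod_(x <- l) x)) = 6)%N by [].
  have : (0 < \prod_(x <- l) x)%N.
    by move: H; case: (\prod_(x <- l) x) => //; rewrite !muln0.
  nia.
Qed.

Lemma perm2 (T : eqType) (a b : T) : perm_eq [:: a; b] [:: b; a].
Proof. change (perm_eq ([:: a] ++ [:: b]) ([:: b] ++ [:: a])); by rewrite perm_catC. Qed.

Lemma fact_shape P s : is_factorisationN1 P s -> P.[1] = 6%N ->
 exists k R, P = 'X^k * R /\ (0 < (R`_0)%R)%N /\
  perm_eq s (nseq k 'X ++ filter (predC (pred1 'X)) s) /\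
  ((exists Q, filter (predC (pred1 'X)) s = [:: Q] /\ R = Q) \/
   (exists A B, perm_eq (filter (predC (pred1 'X)) s) [:: A; B] /\ R = A * B /\
      A.[1] = 2%N /\ B.[1] = 3%N /\ (0 < (A`_0)%R)%N /\ (0 < (B`_0)%R)%N)).
Proof.
case=> Hirr Hprod HP1.
set o := filter _ s; set k := count_mem 'X s.
have Hperm : perm_eq s (nseq k 'X ++ o).
  by rewrite -filter_pred1_nseq perm_sym perm_filterC.
have HPk : P = 'X^k * \prod_(q <- o) q.
  by rewrite -Hprod (perm_big _ Hperm) big_cat prod_nseq.
have Ho : forall q, q \in o -> (2 <= q.[1])%N /\ (0 < (q`_0)%R)%N.
  move=> q; rewrite mem_filter => /andP [qX qs].
  case: (@irr_classify q (Hirr q qs)) => // E.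
  by move: qX; rewrite E /= eqxx.
have Hv : \prod_(q <- o) q.[1] = 6%N.
  by move: HP1; rewrite HPk hornerM hornerXn expr1n mul1r horner_prod.
have Hl := @nat_list6 (map (fun q => q.[1]) o).
have {Hl} Hl := Hl ltac:(by apply/allP => x /mapP [q qo ->]; case: (Ho q qo))
                   ltac:(by rewrite big_map).
exists k.
move: Ho Hperm HPk Hl; clear Hv.
case: o => [|A [|B [|C o]]] //= Ho Hperm HPk.
- by case=> [|[]].
- case=> [[HA]|[]] //; exists A; rewrite HPk big_seq1; split=> //; split.
    by case: (Ho A (mem_head _ _)).
  split=> //; by left; exists A.
- have hA := Ho A (mem_head _ _).
  have hB : (2 <= B.[1])%N /\ (0 < (B`_0)%R)%N by apply: Ho; rewrite !inE eqxx orbT.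
  case: hA hB => [_ a0] [_ b0].
  case=> [//|[[HA HB]|[HA HB]]].
  + exists (A * B); rewrite HPk big_cons big_seq1; split => //; split.
      by rewrite coef0M /= muln_gt0 a0 b0.
    split => //; right; exists A, B; do ! split => //.
  + exists (B * A); rewrite HPk big_cons big_seq1; split; first by rewrite (mulrC A).
    split; first by rewrite coef0M /= muln_gt0 a0 b0.
    split => //; right; exists B, A; do ! split => //; exact: perm2.
- by case=> [|[]].
Qed.

Lemma Xk_uniq k k' (R R' : {poly nat}) : 'X^k * R = 'X^k' * R' ->
  (0 < (R`_0)%R)%N -> (0 < (R'`_0)%R)%N -> k = k' /\ R = R'.
Proof.
move=> E a0 b0.
have hk : k = k'.
  case: (ltngtP k k') => // hk; exfalso.
  - have := congr1 (fun p : {poly nat} => p`_k) E.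
    by rewrite /= !coefXnM ltnn subnn hk => H; rewrite H in a0.
  - have := congr1 (fun p : {poly nat} => p`_k') E.
    by rewrite /= !coefXnM ltnn subnn hk => H; rewrite -H in b0.
subst k'; split => //; apply/polyP => i.
have := congr1 (fun p : {poly nat} => p`_(i + k)) E.
by rewrite /= !coefXnM ltnNge leq_addl /= addnK.
Qed.

Lemma A_form (A : {poly nat}) : A.[1] = 2%N -> (0 < (A`_0)%R)%N ->
  exists m, A = polE [:: 0%N; m].
Proof.
have [e ->] := polE_exists A; rewrite polE_horner coef_polE.
case: e => [|x [|y [|]]] //= _.
case: x => [|x]; case: y => [|y] //=; try by eexists.
move=> _; exists x.+1; apply: perm_polE; exact: perm2.
Qed.

Lemma B_form (B : {poly nat}) : B.[1] = 3%N ->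
  exists v1 v2 v3, (v1 <= v2)%N /\ (v2 <= v3)%N /\ B = polE [:: v1; v2; v3].
Proof.
have [e ->] := polE_exists B; rewrite polE_horner => He.
rewrite -(@perm_polE (sort leq e) e); last by rewrite perm_sort.
have := sort_sorted leq_total e.
have : size (sort leq e) = 3%N by rewrite size_sort.
case: (sort leq e) => [|a [|b [|c [|]]]] //= _ /and3P [hab hbc _].
by exists a, b, c.
Qed.

Lemma AB_form m v1 v2 v3 : polE [:: 0%N; m] * polE [:: v1; v2; v3] =
  polE [:: v1; v2; v3; (v1 + m)%N; (v2 + m)%N; (v3 + m)%N].
Proof. by rewrite polE_mul /= !add0n !(addnC m). Qed.

Lemma perm6 (T : eqType) (x0 x1 x2 x3 x4 x5 : T) :
  perm_eq [:: x0; x2; x4; x1; x3; x5] [:: x0; x1; x2; x3; x4; x5].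
Proof. apply/permP => p /=; lia. Qed.

Lemma AP_form k a m : 'X^k * polE [:: a; (a + 2 * m)%N; (a + 4 * m)%N;
   (a + m)%N; (a + 3 * m)%N; (a + 5 * m)%N] = 'X^(k + a) * \sum_(i < 6) 'X^(i * m).
Proof.
rewrite exprD -mulrA; congr (_ * _).
have -> : \sum_(i < 6) 'X^(i * m) = polE [:: 0 * m; 1 * m; 2 * m; 3 * m; 4 * m; 5 * m]%N.
  by rewrite /polE !big_ord_recl big_ord0 !big_cons big_nil.
rewrite -polE_shift /=; apply: perm_polE.
rewrite mul0n mul1n addn0; exact: perm6.
Qed.




Theorem mainTheorem9 (P : {poly nat}) :
  P.[1] = 6%N ->
  ~ unique_factorisationN1 P ->
  exists a b : nat, (1 <= b)%N /\
    P = 'X^a * (\sum_(i < 6) 'X^(i * b)).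
Proof.
move=> HP1 Hnu.
have [s [t [Hs [Ht Hst]]]] : exists s t, is_factorisationN1 P s /\
    is_factorisationN1 P t /\ ~ perm_eq s t.
  apply: NNPP => H; apply: Hnu => s t Hs Ht; apply: NNPP => Hn; apply: H.
  by exists s, t.
have irrQ : forall Q u, is_factorisationN1 P u ->
    filter (predC (pred1 'X)) u = [:: Q] -> irreducibleN1 Q.
  move=> Q u [Hu _] E; apply: Hu.
  have : Q \in filter (predC (pred1 'X)) u by rewrite E mem_head.
  by rewrite mem_filter => /andP [].
have [k [R [HR [R0 [Ps Cs]]]]] := @fact_shape P s Hs HP1.
have [k' [R' [HR' [R0' [Pt Ct]]]]] := @fact_shape P t Ht HP1.
have [ekk eRR] : k = k' /\ R = R'.
  by apply: Xk_uniq => //; rewrite -HR -HR'.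
subst k' R'.
have Hfin : perm_eq (filter (predC (pred1 'X)) s) (filter (predC (pred1 'X)) t) -> False.
  move=> H; apply: Hst; apply: (perm_trans Ps); rewrite perm_sym.
  apply: (perm_trans Pt); by rewrite perm_cat2l perm_sym.
case: Cs => [[Q [EQ ER]]|[A [B [pAB [ER [HA [HB [a0 b0]]]]]]]];
case: Ct => [[Q' [EQ' EQQ]]|[A' [B' [pAB' [EAB [HA' [HB' [a0' b0']]]]]]]]; subst R.
- by exfalso; apply: Hfin; rewrite EQ EQ' EQQ.
- have [_ [_ H]] := irrQ Q s Hs EQ.
  case: (H A' B' EAB) => E; [by rewrite E -polyC1 hornerC in HA'|by rewrite E -polyC1 hornerC in HB'].
- have [_ [_ H]] := irrQ Q' t Ht EQ'.
  case: (H A B (esym EQQ)) => E; [by rewrite E -polyC1 hornerC in HA|by rewrite E -polyC1 hornerC in HB].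
have [m Am] := @A_form A HA a0; have [n An] := @A_form A' HA' a0'.
have [v1 [v2 [v3 [h1 [h2 Bv]]]]] := @B_form B HB.
have [w1 [w2 [w3 [h3 [h4 Bw]]]]] := @B_form B' HB'.
have Hp := EAB; move: Hp; rewrite Am An Bv Bw !AB_form => /polE_eq Hp.
have [c1 c2] := @core _ _ _ _ _ _ _ _ h1 h2 h3 h4 Hp.
have [c1' c2'] := @core _ _ _ _ _ _ _ _ h3 h4 h1 h2 (etrans (perm_sym _ _) Hp).
case: (ltngtP m n) => hmn.
- have [e1 [e2 e3]] := c2 hmn.
  exists (k + v1)%N, m; split => //.
  rewrite HR Am Bv AB_form -AP_form e1 e2; congr (_ * polE _); congr [:: _; _; _; _; _; _]; lia.
- have [e1 [e2 e3]] := c2' hmn.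
  exists (k + w1)%N, n; split => //.
  rewrite HR EAB An Bw AB_form -AP_form e1 e2; congr (_ * polE _); congr [:: _; _; _; _; _; _]; lia.
- have [e1 [e2 e3]] := c1 hmn; subst n w1 w2 w3.
  exfalso; apply: Hfin; apply: (perm_trans pAB); rewrite perm_sym; apply: (perm_trans pAB'); by rewrite Am An Bv Bw.
Qed.
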